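(* Let $\mu$ be a finite non-negative Borel measure on $\mathbb{R}$ and let $i\ge 0$. Then for every $z=x+iy$ with $y>0$ and $x>0$, $$|G_\mu(z)|<\frac{2\mu(\mathbb{R})}{|x|}+\frac{2^{i}\int_{\mathbb{R}}|t|^i\,d\mu(t)}{y|x|^i}.$$
   Context: $G_\mu(z)=\int_{\mathbb{R}}\frac{1}{z-t}\,d\mu(t)$ for $z$ in the open upper half-plane is the Cauchy transform of $\mu$. *)

(* Defs.v *)
From HB Require Import structures.
From mathcomp Require Import all_boot all_order all_algebra.
From mathcomp Require Import all_classical all_reals all_analysis.
From mathcomp Require Import complex.
Set Implicit Arguments. Unset Strict Implicit. Unset Printing Implicit Defensive.
Import Order.TTheory GRing.Theory Num.Theory.
Import numFieldNormedType.Exports.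
Local Open Scope ring_scope.
Local Open Scope complex_scope.

(* Cauchy transform G_mu(z) = \int_R 1/(z - t) d mu(t), a complex-valued
   integral defined componentwise (real and imaginary parts integrated
   separately with the real-valued Lebesgue integral [Rintegral]). *)
Definition cauchy_transform (R : realType)
    (mu : {measure set (measurableTypeR R) -> \bar R}) (z : R[i]) : R[i] :=
  (Rintegral mu setT (fun t : R => complex.Re ((z - t%:C)^-1))) +i*
  (Rintegral mu setT (fun t : R => complex.Im ((z - t%:C)^-1))).

Definition cmod (R : realType) (z : R[i]) : R :=
  Num.sqrt (complex.Re z ^+ 2 + complex.Im z ^+ 2).

(* Main.v *)
Require Import Defs.
From HB Require Import structures.
From mathcomp Require Import all_boot all_order all_algebra.
From mathcomp Require Import all_classical all_reals all_analysis.
From mathcomp Require Import complex.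
From mathcomp Require Import ring lra.
Import Order.TTheory GRing.Theory Num.Theory.
Import numFieldNormedType.Exports.
Local Open Scope ring_scope.
Local Open Scope complex_scope.
Lemma m_exists (R : realType) (x y : R) : 0 < x -> 0 < y ->
  exists m : R, [/\ 0 < m, m < 2 / x &
     forall d, x ^+ 2 / 4 + y ^+ 2 <= d -> 1 <= d * m ^+ 2].
Proof.
move=> hx hy.
have hq : 0 < x ^+ 2 + 4 * y ^+ 2 by nra.
have hxq : 0 < x * (x ^+ 2 + 4 * y ^+ 2) by nra.
have hxy := mulr_gt0 hx (exprn_gt0 2 hy).
exists (2 * (x ^+ 2 + 2 * y ^+ 2) / (x * (x ^+ 2 + 4 * y ^+ 2))).
split.
- apply: divr_gt0 => //; nra.
- rewrite ltr_pdivrMr // mulrAC ltr_pdivlMr //; nra.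
- move=> d hd.
  have h1 : (x ^+ 2 / 4 + y ^+ 2) * (2 * (x ^+ 2 + 2 * y ^+ 2) / (x * (x ^+ 2 + 4 * y ^+ 2))) ^+ 2
     = (x ^+ 2 + 2 * y ^+ 2) ^+ 2 / (x ^+ 2 * (x ^+ 2 + 4 * y ^+ 2)).
    field. by apply/andP; split; rewrite gt_eqF.
  apply: (le_trans _ (ler_wpM2r (sqr_ge0 _) hd)).
  rewrite h1 ler_pdivlMr ?mul1r; last by nra.
  have := exprn_gt0 4 hy. nra.
Qed.

Lemma cs_bound (R : realType) (A B a y u : R) : 0 < y -> 0 <= u ->
  1 <= (a ^+ 2 + y ^+ 2) * u ^+ 2 ->
  A * (a / (a ^+ 2 + y ^+ 2)) + B * (- (y / (a ^+ 2 + y ^+ 2)))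
    <= Num.sqrt (A ^+ 2 + B ^+ 2) * u.
Proof.
move=> hy hu h1.
set d := a ^+ 2 + y ^+ 2.
have hd : 0 < d by rewrite /d; nra.
set S := Num.sqrt _.
have hS0 : 0 <= S by apply: sqrtr_ge0.
have hS2 : S ^+ 2 = A ^+ 2 + B ^+ 2 by rewrite sqr_sqrtr //; nra.
have -> : A * (a / d) + B * - (y / d) = (A * a - B * y) / d by field; rewrite gt_eqF.
rewrite ler_pdivrMr //.
have hp : (A * a - B * y) ^+ 2 <= S ^+ 2 * d.
  rewrite hS2 /d; have := sqr_ge0 (A * y + B * a); nra.
have hq : S ^+ 2 * d <= (S * u * d) ^+ 2.
  have -> : (S * u * d) ^+ 2 = S ^+ 2 * d * (d * u ^+ 2) by ring.
  rewrite ler_peMr //; apply: mulr_ge0; [exact: sqr_ge0 | exact: ltW].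
have hq0 : 0 <= S * u * d by apply: mulr_ge0 => //; [apply: mulr_ge0 | apply: ltW].
apply: le_trans (ler_norm _) _.
rewrite -ler_sqr ?nnegrE ?normr_ge0 // real_normK ?num_real.
exact: le_trans hp hq.
done.
Qed.

Lemma pow_bound (R : realType) (x y t i : R) : 0 < x -> 0 < y -> 0 <= i ->
  x / 2 <= `|t| -> y^-1 <= 2 `^ i / (y * x `^ i) * `|t| `^ i.
Proof.
move=> hx hy hi ht.
have hxi : 0 < x `^ i by apply: powR_gt0.
rewrite mulrAC -powRM ?normr_ge0 //.
have hle : x `^ i <= (2 * `|t|) `^ i.
  apply: ge0_ler_powR => //; rewrite ?nnegrE.
  - exact: ltW.
  - by rewrite mulr_ge0.
  - lra.
rewrite ler_pdivlMr ?mulr_gt0 // mulrA mulVf ?gt_eqF // mul1r.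
exact: hle.
Qed.

Lemma cpx (R : realType) (x y t : R) :
  complex.Re ((x +i* y) - t%:C)^-1 = (x - t) / ((x - t) ^+ 2 + y ^+ 2) /\
  complex.Im ((x +i* y) - t%:C)^-1 = - (y / ((x - t) ^+ 2 + y ^+ 2)).
Proof.
by rewrite /= subr0.
Qed.

Lemma mV (R : realType) (f : R -> R) : measurable_fun setT f -> (forall t, 0 < f t) ->
  measurable_fun setT (fun t => (f t)^-1).
Proof.
move=> mf f0.
have -> : (fun t => (f t)^-1) = (fun t => expR (- ln (f t))).
  by apply/funext => t; rewrite expRN lnK // posrE.
apply: measurableT_comp; first exact: measurable_realfun.measurable_expR.
apply: measurableT_comp; first exact: measurable_realfun.oppr_measurable.
apply: measurableT_comp => //; exact: measurable_realfun.measurable_ln.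
Qed.

Lemma bdd_int (R : realType) (mu : {measure set (measurableTypeR R) -> \bar R})
  (f : R -> R) (K : R) : (mu setT < +oo)%E -> measurable_fun setT f ->
  (forall t, `|f t| <= K) -> mu.-integrable setT (EFin \o f).
Proof.
move=> mfin mf hK.
apply/integrableP; split; first by apply/measurable_realfun.measurable_EFinP.
apply: (@le_lt_trans _ _ (\int[mu]_(t in setT) (cst K%:E t))%E).
  apply: ge0_le_integral => //.
  - have -> : (fun x => `|(EFin \o f) x|%E) = EFin \o (fun x => `|f x|) by [].
    apply/measurable_realfun.measurable_EFinP.
    apply: measurableT_comp mf; exact: measurable_realfun.normr_measurable.
  - by move=> t _; rewrite /= lee_fin.
rewrite integral_cst //.
apply: lte_mul_pinfty => //.
rewrite lee_fin; exact: le_trans (hK point).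
Qed.


Lemma intZ (R : realType) (mu : {measure set (measurableTypeR R) -> \bar R})
  (f : R -> R) (k : R) : mu.-integrable setT (EFin \o f) ->
  mu.-integrable setT (EFin \o (fun t => k * f t)).
Proof.
move=> h; apply: eq_integrable (integrableZl _ k h) => //.
Qed.

Lemma intD (R : realType) (mu : {measure set (measurableTypeR R) -> \bar R})
  (f g : R -> R) : mu.-integrable setT (EFin \o f) -> mu.-integrable setT (EFin \o g) ->
  mu.-integrable setT (EFin \o (fun t => f t + g t)).
Proof.
move=> h1 h2; apply: eq_integrable (integrableD _ h1 h2) => //.
Qed.

Theorem proposition2 (R : realType)
    (mu : {measure set (measurableTypeR R) -> \bar R})
    (mu_fin : (mu setT < +oo)%E) (mu_nz : (0 < mu setT)%E)
    (i : R) (hi : 0 <= i) (x y : R) (hx : 0 < x) (hy : 0 < y) :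
  ((cmod (cauchy_transform mu (x +i* y)))%:E <
     (2 * fine (mu setT) / `|x|)%:E +
     ((2 `^ i) / (y * `|x| `^ i))%:E * (\int[mu]_t (`|t| `^ i)%:E))%E.
Proof.
have ax : `|x| = x by rewrite gtr0_norm.
have hc : 0 < 2 `^ i / (y * `|x| `^ i).
  by rewrite divr_gt0 ?mulr_gt0 ?powR_gt0 ?normr_gt0 ?gt_eqF.
set c := 2 `^ i / (y * `|x| `^ i) in hc *.
have Mfin : mu setT \is a fin_num by rewrite ge0_fin_numE // ltW.
set M := fine (mu setT).
have muE : mu setT = M%:E by rewrite fineK.
have hM : 0 < M by rewrite -lte_fin -muE.
set d := fun t : R => (x - t) ^+ 2 + y ^+ 2.
have d0 : forall t, 0 < d t.
  by move=> t; rewrite /d; have := sqr_ge0 (x - t); have := exprn_gt0 2 hy; lra.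
have md : measurable_fun setT d.
  apply: measurable_realfun.measurable_funD => //.
  apply: measurable_realfun.measurable_funX.
  exact: measurable_realfun.measurable_funB.
have mre : measurable_fun setT (fun t : R => (x - t) / d t).
  apply: measurable_realfun.measurable_funM; last exact: mV.
  exact: measurable_realfun.measurable_funB.
have mim : measurable_fun setT (fun t : R => - (y / d t)).
  apply: measurable_realfun.measurable_funN.
  apply: measurable_realfun.measurable_funM => //; exact: mV.
have ire : mu.-integrable setT (EFin \o (fun t : R => (x - t) / d t)).
  apply: (@bdd_int _ _ _ y^-1) => // t.
  rewrite normrM normfV (gtr0_norm (d0 t)) ler_pdivrMr // mulrC ler_pdivlMr //.
  have e : `|x - t| ^+ 2 = (x - t) ^+ 2 := real_normK (num_real _).
  have := normr_ge0 (x - t); rewrite /d -e; nra.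
have iim : mu.-integrable setT (EFin \o (fun t : R => - (y / d t))).
  apply: (@bdd_int _ _ _ y^-1) => // t.
  rewrite normrN normrM normfV (gtr0_norm (d0 t)) (gtr0_norm hy).
  rewrite ler_pdivrMr // mulrC ler_pdivlMr //.
  have := sqr_ge0 (x - t); rewrite /d; nra.
set A := Rintegral mu setT (fun t : R => (x - t) / d t).
set B := Rintegral mu setT (fun t : R => - (y / d t)).
have -> : cauchy_transform mu (x +i* y) = A +i* B.
  rewrite /cauchy_transform /A /B.
  congr (_ +i* _); apply: eq_Rintegral => t _; [exact: (proj1 (cpx _ x y t)) | exact: (proj2 (cpx _ x y t))].
rewrite /cmod /=.
set S := Num.sqrt _.
have hS0 : 0 <= S by apply: sqrtr_ge0.
have J0 : (0 <= \int[mu]_t (`|t| `^ i)%:E)%E.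
  by apply: integral_ge0 => t _; rewrite lee_fin powR_ge0.
set J := (\int[mu]_t (`|t| `^ i)%:E)%E in J0 *.
case: (eqVneq J +oo%E) => [Jinf|Jfin].
  rewrite Jinf mulry gtr0_sg // mul1e addey //; exact: ltry.
have Jf : J \is a fin_num by rewrite ge0_fin_numE // lt_neqAle Jfin leey.
set I := fine J.
have JE : J = I%:E by rewrite fineK.
have mp : measurable_fun setT (fun t : R => `|t| `^ i).
  exact: (measurableT_comp (measurable_realfun.measurable_powR i) (@measurable_realfun.normr_measurable R setT)).
have ip : mu.-integrable setT (EFin \o (fun t : R => `|t| `^ i)).
  apply/integrableP; split; first exact/measurable_realfun.measurable_EFinP.
  have -> : (fun t : R => `|(EFin \o (fun t : R => (`|t| `^ i)%R)) t|%E) = (fun t : R => (`|t| `^ i)%:E).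
    by apply/funext => t /=; rewrite ger0_norm // powR_ge0.
  by rewrite -/J JE ltry.
have RI : Rintegral mu setT (fun t : R => `|t| `^ i) = I by [].
rewrite JE -EFinM -EFinD lte_fin.
have [m [m0 m2x mb]] := @m_exists R x y hx hy.
have H1 : Rintegral mu setT (fun t : R => A * ((x - t) / d t) + B * (- (y / d t))) = A * A + B * B.
  rewrite RintegralD //; [| exact: intZ | exact: intZ].
  by rewrite !RintegralZl.
have icst : mu.-integrable setT (EFin \o (fun t : R => S * m)).
  apply: (@bdd_int _ _ _ `|S * m|) => //.
have H2 : Rintegral mu setT (fun t : R => S * m + (S * c) * `|t| `^ i) = S * m * M + S * c * I.
  rewrite RintegralD //; last exact: intZ.
  by rewrite Rintegral_cst // RintegralZl // RI.
have H3 : Rintegral mu setT (fun t : R => A * ((x - t) / d t) + B * (- (y / d t)))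
    <= Rintegral mu setT (fun t : R => S * m + (S * c) * `|t| `^ i).
  apply: le_Rintegral => //; [ apply: intD; exact: intZ | apply: intD => //; exact: intZ | ].
  move=> t _.
  have hp := powR_ge0 `|t| i.
  have -> : S * m + S * c * `|t| `^ i = S * (m + c * `|t| `^ i) by ring.
  apply: cs_bound => //.
    by apply: addr_ge0; [exact: ltW | apply: mulr_ge0 => //; exact: ltW].
  case: (lerP `|t| (x / 2)) => ht.
    have ht' : t <= x / 2 by apply: le_trans (ler_norm t) ht.
    have hd : x ^+ 2 / 4 + y ^+ 2 <= (x - t) ^+ 2 + y ^+ 2.
      rewrite lerD2r.
      have h1 : 0 <= x - t - x / 2 by lra.
      have h2 : 0 <= x - t + x / 2 by lra.
      have := mulr_ge0 h1 h2. nra.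
    apply: le_trans (mb _ hd) _.
    apply: ler_wpM2l; first by have := sqr_ge0 (x - t); have := exprn_gt0 2 hy; lra.
    have := mulr_ge0 (ltW hc) hp; nra.
  have hb := @pow_bound R x y t i hx hy hi (ltW ht).
  have e : y * y^-1 = 1 by rewrite mulfV // gt_eqF.
  have hyu : 1 <= y * (m + c * `|t| `^ i).
    rewrite -{1}e; apply: ler_wpM2l; [exact: ltW | ]. rewrite /c ax; lra.
  have h2 : 1 <= (y * (m + c * `|t| `^ i)) ^+ 2.
    by have := hyu; nra.
  apply: (le_trans h2); rewrite exprMn ler_wpM2r ?sqr_ge0 //.
  by have := sqr_ge0 (x - t); lra.
rewrite H1 H2 in H3.
have hS2 : S ^+ 2 = A * A + B * B by rewrite sqr_sqrtr ?addr_ge0 ?sqr_ge0 // !expr2.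
have hSle : S <= m * M + c * I.
  have hI : 0 <= I by rewrite /I fine_ge0.
  case: (eqVneq S 0) => [->|Sn0]; first by apply: addr_ge0; apply: mulr_ge0 => //; apply: ltW.
  have Sp : 0 < S by rewrite lt_neqAle eq_sym Sn0.
  rewrite -(ler_pM2l Sp); rewrite -hS2 in H3; rewrite expr2 in H3; lra.
rewrite ax; apply: (le_lt_trans hSle).
rewrite ltrD2r -mulrA (mulrC M) mulrA ltr_pM2r //; lra.
Qed.
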